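(* Let $G$ be a hypo-unique domination graph of order at least $3$. Then: (i) for every $x\in V(G)$, the graph $G-x$ has no $\gamma$-critical vertices; (ii) for every pair of distinct vertices $x,y$ of $G$, $\gamma(G-\{x,y\})\geq \gamma(G)-1$, and equality holds at least when $y$ does not belong to the unique $\gamma$-set of $G-x$.
   Context: All graphs are finite, simple and undirected. A set $D\subseteq V(G)$ is dominating if every vertex of $G$ not in $D$ has a neighbor in $D$; $\gamma(G)$ is the minimum size of a dominating set, and a dominating set of size $\gamma(G)$ is a $\gamma$-set. A vertex $v$ of a graph $H$ is $\gamma$-critical in $H$ if $\gamma(H-v)<\gamma(H)$. $G$ is a hypo-unique domination graph if $G$ has at least two $\gamma$-sets but for every $v\in V(G)$ the graph $G-v$ has exactly one $\gamma$-set. *)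

(* Defs.v *)
(* A simple graph is a symmetric irreflexive relation e on a finType T.
   Induced subgraphs are represented by their vertex set S : {set T}
   (G[S]); so G - v is G[~: [set v]] and G - {x,y} is G[~: [set x; y]]. *)
From mathcomp Require Import all_boot.
Set Implicit Arguments. Unset Strict Implicit. Unset Printing Implicit Defensive.

Section Dom.
Variable T : finType.
Variable e : rel T.

Definition dominating (S D : {set T}) : bool :=
  (D \subset S) && [forall v in S :\: D, [exists u in D, e u v]].

(* domination number of G[S]: minimum size of a dominating set
   (S itself dominates G[S], so #|S| is a valid initial bound) *)
Definition gamma (S : {set T}) : nat :=
  \big[minn/#|S|]_(D : {set T} | dominating S D) #|D|.

Definition gamma_set (S D : {set T}) : bool :=
  dominating S D && (#|D| == gamma S).

Definition gamma_critical (S : {set T}) (v : T) : bool :=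
  (v \in S) && (gamma (S :\ v) < gamma S).

Definition hypo_unique : Prop :=
  1 < #|[set D | gamma_set [set: T] D]| /\
  forall v : T, #|[set D | gamma_set (~: [set v]) D]| = 1.
End Dom.

(* Main.v *)
Require Import Defs.
From mathcomp Require Import all_boot.
From mathcomp Require Import zify.
From Stdlib Require Import Classical.
Set Implicit Arguments. Unset Strict Implicit. Unset Printing Implicit Defensive.
Section Base.
Variable T : finType.
Variable e : rel T.
Hypothesis e_sym : symmetric e.
Hypothesis e_irr : irreflexive e.

Lemma domP (S D : {set T}) :
  reflect (D \subset S /\ forall w, w \in S -> w \notin D -> exists2 u, u \in D & e u w)
          (dominating e S D).
Proof.
apply: (iffP andP) => [[sub /forallP H]|[sub H]]; split => //.
- move=> w wS wD. have /implyP := H w. rewrite inE wS wD => /(_ isT) /existsP [u /andP [uD euw]]. by exists u.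
- apply/forallP => w; apply/implyP; rewrite inE => /andP [wD wS].
  have [u uD euw] := H w wS wD. apply/existsP; exists u; by rewrite uD.
Qed.

Lemma gamma_le S D : dominating e S D -> gamma e S <= #|D|.
Proof.
move=> H; rewrite /gamma.
have : D \in index_enum {set T} by rewrite mem_index_enum.
elim: (index_enum _) => [//|a r IH]; rewrite big_cons inE => /orP [/eqP <-|Hr].
  by rewrite H geq_minl.
case: ifP => _; last exact: IH.
by rewrite geq_min IH ?orbT.
Qed.

Lemma gamma_ex S : exists D, dominating e S D /\ #|D| = gamma e S.
Proof.
rewrite /gamma; apply: (big_ind (fun m => exists D, dominating e S D /\ #|D| = m)).
- exists S; split => //; apply/domP; split => // w -> //.
- move=> x y [D1 [H1 <-]] [D2 [H2 <-]]; case: (leqP #|D1| #|D2|) => h.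
  + by exists D1; split => //; rewrite (minn_idPl h).
  + by exists D2; split => //; rewrite (minn_idPr (ltnW h)).
- by move=> D HD; exists D.
Qed.


Lemma dom_restr (S S' D : {set T}) : dominating e S D -> D \subset S' -> S' \subset S -> dominating e S' D.
Proof.
move=> /domP [_ H] sub sub'; apply/domP; split => // w wS' wD.
exact: H (subsetP sub' _ wS') wD.
Qed.

Lemma dom_add (S : {set T}) v (D : {set T}) u : dominating e (S :\ v) D -> v \in S -> u \in S ->
  (u = v \/ e u v) -> dominating e S (u |: D).
Proof.
move=> /domP [sub H] vS uS huv; apply/domP; split.
  apply/subsetP => w; rewrite !inE => /orP [/eqP -> //|wD].
  by have := subsetP sub _ wD; rewrite inE => /andP [].
move=> w wS; rewrite !inE negb_or => /andP [wu wD].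
case: (eqVneq w v) => [wv0|wv]; first subst w.
  case: huv => [uv|euv]; first by rewrite uv eqxx in wu.
  by exists u; rewrite ?inE ?eqxx.
have wSv : w \in S :\ v by rewrite !inE wv wS.
have [x xD exw] := H w wSv wD.
by exists x; rewrite // inE xD orbT.
Qed.

Lemma dom_keep (S : {set T}) v (D : {set T}) u : dominating e (S :\ v) D -> v \in S -> u \in D -> e u v ->
  dominating e S D.
Proof.
move=> /domP [sub H] vS uD euv; apply/domP; split.
  by apply: (subset_trans sub); apply/subsetP => w; rewrite inE => /andP [].
move=> w wS wD; case: (eqVneq w v) => [->|wv]; first by exists u.
have wSv : w \in S :\ v by rewrite !inE wv wS.
exact: H w wSv wD.
Qed.

Lemma gamma_rem (S : {set T}) v : v \in S -> gamma e S <= (gamma e (S :\ v)).+1.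
Proof.
move=> vS; have [D [HD <-]] := gamma_ex (S :\ v).
apply: leq_trans (gamma_le (dom_add HD vS vS (or_introl erefl))) _.
by rewrite cardsU1; case: (v \in D).
Qed.

Lemma gsetP (S D : {set T}) : dominating e S D -> #|D| <= gamma e S -> gamma_set e S D.
Proof.
move=> HD h; rewrite /gamma_set HD eqn_leq h gamma_le //.
Qed.

Lemma gset_dom (S D : {set T}) : gamma_set e S D -> dominating e S D.
Proof. by case/andP. Qed.

Lemma gset_card (S D : {set T}) : gamma_set e S D -> #|D| = gamma e S.
Proof. by case/andP => _ /eqP. Qed.

Definition uniq_g (S : {set T}) := forall D1 D2, gamma_set e S D1 -> gamma_set e S D2 -> D1 = D2.

Lemma L_lemma (S : {set T}) v : uniq_g S -> v \in S -> gamma e (S :\ v) < gamma e S ->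
  forall u, u \in S -> u != v -> ~~ e u v.
Proof.
move=> U vS lt u uS uv; apply/negP => euv.
have [D [HD cD]] := gamma_ex (S :\ v).
have vD : v \notin D.
  by apply/negP => /(subsetP (proj1 (elimT (domP _ _) HD))); rewrite !inE eqxx.
case uD : (u \in D).
  have := gamma_le (dom_keep HD vS uD euv); lia.
have G1 : gamma_set e S (v |: D).
  apply: gsetP; first exact: (dom_add HD vS vS (or_introl erefl)).
  rewrite cardsU1 vD; lia.
have G2 : gamma_set e S (u |: D).
  apply: gsetP; first exact: (dom_add HD vS uS (or_intror euv)).
  rewrite cardsU1 uD; lia.
have := U _ _ G1 G2 => /setP /(_ v); rewrite !inE eqxx /= (negbTE vD) orbF eq_sym.
by rewrite (negbTE uv).
Qed.

End Base.

Section Main.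
Variable T : finType.
Variable e : rel T.
Hypothesis e_sym : symmetric e.
Hypothesis e_irr : irreflexive e.
Hypothesis hord : 3 <= #|T|.
Hypothesis hG : hypo_unique e.

Local Notation gm := (gamma e [set: T]).
Local Notation gmv x := (gamma e (~: [set x])).

Lemma setT_D1 (x : T) : [set: T] :\ x = ~: [set x].
Proof. by apply/setP => w; rewrite !inE andbT. Qed.

Lemma SxD (x y : T) : ~: [set x] :\ y = ~: [set y] :\ x.
Proof. by apply/setP => w; rewrite !inE andbC. Qed.

Lemma Sx2 (x y : T) : ~: [set x; y] = ~: [set x] :\ y.
Proof. by apply/setP => w; rewrite !inE negb_or andbC. Qed.

Lemma eirr (u : T) : e u u = false.
Proof. exact: e_irr. Qed.

Lemma neq_of_e u v : e u v -> u != v.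
Proof. by move=> h; apply/eqP => E; rewrite E eirr in h. Qed.

Lemma U x : uniq_g e (~: [set x]).
Proof.
move=> D1 D2 H1 H2; have /eqP/cards1P [D0 E0] := hG.2 x.
have : D1 \in [set D | gamma_set e (~: [set x]) D] by rewrite inE.
have : D2 \in [set D | gamma_set e (~: [set x]) D] by rewrite inE.
by rewrite E0 !inE => /eqP -> /eqP ->.
Qed.

Lemma Two : exists D1 D2, [/\ gamma_set e [set: T] D1, gamma_set e [set: T] D2 & D1 != D2].
Proof.
have /card_gt1P [D1 [D2 [H1 H2 n]]] := hG.1.
by exists D1, D2; rewrite !inE in H1 H2.
Qed.

Lemma rem_bound x : gm <= (gmv x).+1.
Proof. by rewrite -setT_D1; apply: gamma_rem; rewrite inE. Qed.

Lemma dom_avoid (D : {set T}) q : dominating e [set: T] D -> q \notin D ->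
  dominating e (~: [set q]) D.
Proof.
move=> HD qD; apply: (dom_restr HD); last exact: subsetT.
by apply/subsetP => u uD; rewrite !inE; apply: contraNneq qD => <-.
Qed.

Lemma gset_avoid (D : {set T}) q : gamma_set e [set: T] D -> q \notin D ->
  gmv q = gm -> gamma_set e (~: [set q]) D.
Proof.
move=> HD qD eq; apply: gsetP; first exact: dom_avoid (gset_dom HD) qD.
by rewrite eq (gset_card HD).
Qed.

Lemma Li x v : v != x -> gamma e (~: [set x] :\ v) < gmv x ->
  forall u, u != x -> u != v -> ~~ e u v.
Proof.
move=> vx lt u ux uv.
have vS : v \in ~: [set x] by rewrite !inE.
have uS : u \in ~: [set x] by rewrite !inE.
exact: (L_lemma (@U x) vS lt uS uv).
Qed.

Lemma NC_leaf x v : v != x -> e x v -> (forall u, u != x -> u != v -> ~~ e u v) ->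
  gm <= gmv x.
Proof.
move=> vx exv H.
have [D [HD cD]] := gamma_ex e (~: [set x]).
have /domP [sub Hd] := HD.
have vD : v \in D.
  apply/negPn/negP => vD.
  have vS : v \in ~: [set x] by rewrite !inE.
  have [u uD euv] := Hd v vS vD.
  have ux : u != x by have := subsetP sub _ uD; rewrite !inE.
  by have := H u ux (neq_of_e euv); rewrite euv.
have dom : dominating e [set: T] (x |: (D :\ v)).
  apply/domP; split; first exact: subsetT.
  move=> w _; rewrite !inE negb_or negb_and negbK => /andP [wx wvD].
  case: (eqVneq w v) => [->|wv]; first by exists x; rewrite ?inE ?eqxx.
  rewrite (negbTE wv) /= in wvD.
  have wS : w \in ~: [set x] by rewrite !inE.
  have [u uD euw] := Hd w wS wvD.
  exists u => //; rewrite !inE uD andbT; apply/orP; right.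
  apply: contraTneq euw => ->; rewrite e_sym; apply: H => //.
have := gamma_le dom; rewrite cardsU1 -cD (cardsD1 v D) vD; case: (x \notin D :\ v) => /=; lia.
Qed.


Lemma Step1 z (E : {set T}) q : gm <= gmv z -> gamma_set e [set: T] E -> z \in E -> q \notin E ->
  e z q -> (forall u, u \in E -> e u q -> u = z) -> (exists w, w != z /\ e w q) ->
  gmv q = gm /\ (forall D, gamma_set e [set: T] D -> q \notin D -> D = E).
Proof.
move=> lez HE zE qE ezq priv [w [wz ewq]].
have le1 : gmv q <= gm.
  by rewrite -(gset_card HE); apply: gamma_le; exact: dom_avoid (gset_dom HE) qE.
have eq1 : gmv q = gm.
  apply/eqP; rewrite eqn_leq le1 /= leqNgt; apply/negP => lt.
  have [S [HS cS]] := gamma_ex e (~: [set q]).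
  case zS: (z \in S).
    have HS' : dominating e ([set: T] :\ q) S by rewrite setT_D1.
    have h := gamma_le (dom_keep HS' (in_setT q) zS ezq); clear -h cS lt; lia.
  have HS2 : dominating e (~: [set q] :\ z) S.
    apply: (dom_restr HS); last by apply/subsetP => t; rewrite !inE => /andP [].
    have /domP [sub _] := HS.
    apply/subsetP => t tS; rewrite !inE; have := subsetP sub _ tS; rewrite !inE => ->.
    by rewrite andbT; apply: contraTneq tS => ->; rewrite zS.
  have lt2 : gamma e (~: [set z] :\ q) < gmv z.
    rewrite -SxD; have h := gamma_le HS2; clear -h cS lt lez; lia.
  have qz : q != z by rewrite eq_sym; exact: neq_of_e ezq.
  have wq : w != q := neq_of_e ewq.
  by have := Li qz lt2 wz wq; rewrite ewq.
split => // D HD qD; apply: (@U q); [exact: gset_avoid HD qD eq1 | exact: gset_avoid HE qE eq1].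
Qed.

Lemma Kstar z (E : {set T}) q : gm <= gmv z -> gamma_set e [set: T] E -> z \in E -> q \notin E ->
  e z q -> (forall u, u \in E -> e u q -> u = z) -> (exists w, w != z /\ e w q) ->
  forall u, e u z -> u = q.
Proof.
move=> lez HE zE qE ezq priv nl.
have [gq U1] := Step1 lez HE zE qE ezq priv nl.
have qz : z != q := neq_of_e ezq.
have [D' [HD' DE]] : exists D', gamma_set e [set: T] D' /\ D' != E.
  have [D1 [D2 [H1 H2 n12]]] := Two.
  case: (eqVneq D1 E) => [e1|n1]; last by exists D1.
  by exists D2; split => //; rewrite -e1 eq_sym.
have qD' : q \in D'.
  apply/negPn/negP => qD; have ED := U1 _ HD' qD; by rewrite ED eqxx in DE.
have Qsub : forall p, p \notin D' -> e q p -> (forall u, u \in D' -> e u p -> u = q) -> p = z.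
  move=> p pD eqp privp.
  have pE : p \in E.
    case: (classic (exists w, w != q /\ e w p)) => [nlp|lp].
      have [_ U2] := Step1 (eq_leq (esym gq)) HD' qD' pD eqp privp nlp.
      apply/negPn/negP => pE; have ED := U2 _ HE pE; by rewrite ED eqxx in DE.
    apply/negPn/negP => pE.
    have /domP [_ Hd] := gset_dom HE.
    have [u uE eup] := Hd p (in_setT p) pE.
    case: (eqVneq u q) => [uq|uq]; first by rewrite uq (negbTE qE) in uE.
    by apply: lp; exists u.
  by apply: priv pE _; rewrite e_sym.
have cD' : (#|D' :\ q|).+1 = gm by have := cardsD1 q D'; rewrite qD' (gset_card HD').
have domw : forall w, w != q -> w != z -> w \notin D' :\ q -> exists2 u, u \in D' :\ q & e u w.
  move=> w wq wz; rewrite !inE negb_and negbK (negbTE wq) /= => wD.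
  have /domP [_ Hd] := gset_dom HD'.
  case: (classic (exists2 u, u \in D' :\ q & e u w)) => // nex.
  have [u uD euw] := Hd w (in_setT w) wD.
  exfalso; move/eqP: wz; apply.
  apply: Qsub => //.
    have uq : u = q.
      apply/eqP; apply/negPn/negP => uq; apply: nex; exists u => //; by rewrite !inE uq uD.
    by rewrite -uq.
  move=> u' u'D eu'w; apply/eqP/negPn/negP => u'q; apply: nex; exists u' => //.
  by rewrite !inE u'q u'D.
case zD : (z \in D').
  have dom : dominating e (~: [set q]) (D' :\ q).
    apply/domP; split.
      by apply/subsetP => t; rewrite !inE => /andP [].
    move=> w wq wD; rewrite !inE in wq.
    have wz : w != z by apply: contraNneq wD => ->; rewrite !inE zD andbT.
    exact: domw wq wz wD.
  by move: (gamma_le dom); rewrite gq -cD' ltnn.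
have dom : dominating e (~: [set q] :\ z) (D' :\ q).
  apply/domP; split.
    apply/subsetP => t; rewrite !inE => /andP [tq tD]; rewrite tq andbT.
    by apply: contraTneq tD => ->; rewrite zD.
  move=> w wS wD; rewrite !inE in wS; case/andP: wS => wz wq.
  exact: domw wq wz wD.
have lt : gamma e (~: [set q] :\ z) < gmv q by have h := gamma_le dom; clear -h cD' gq; lia.
move=> u euz; apply/eqP/negPn/negP => uq.
have uz : u != z := neq_of_e euz.
have zq' : z != q := qz.
by have := Li zq' lt uq uz; rewrite euz.
Qed.


Definition leafs z := [set w | e z w && [forall u, e u w ==> (u == z)]].

Lemma leafsP z w : reflect (e z w /\ forall u, e u w -> u = z) (w \in leafs z).
Proof.
rewrite inE; apply: (iffP andP) => [[h /forallP H]|[h H]]; split => //.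
- by move=> u euw; apply/eqP; exact: (implyP (H u) euw).
- by apply/forallP => u; apply/implyP => euw; rewrite (H u euw).
Qed.

Lemma AL z : gm <= gmv z ->
  (forall E q, gamma_set e [set: T] E -> z \in E -> q \notin E -> e z q ->
     (forall u, u \in E -> e u q -> u = z) -> forall w, e w q -> w = z) -> False.
Proof.
move=> lez Hall.
have [Dz [HDz cDz]] := gamma_ex e (~: [set z]).
have gD : gamma_set e (~: [set z]) Dz by rewrite /gamma_set HDz cDz eqxx.
have /domP [subDz HdDz] := HDz.
have zDz : z \notin Dz by apply/negP => /(subsetP subDz); rewrite in_setC in_set1 eqxx.
have LzDz : leafs z \subset Dz.
  apply/subsetP => w /leafsP [ezw lw]; apply/negPn/negP => wD.
  have wS : w \in ~: [set z] by rewrite in_setC in_set1 eq_sym neq_of_e.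
  have [u uD euw] := HdDz w wS wD.
  by rewrite (lw u euw) (negbTE zDz) in uD.
have cardL : #|leafs z| <= #|Dz| := subset_leq_card LzDz.
have ge_d : gm + #|leafs z| <= (gmv z).+1.
  have dom : dominating e [set: T] (z |: (Dz :\: leafs z)).
    apply/domP; split; first exact: subsetT.
    move=> w _; rewrite in_setU1 in_setD negb_or negb_and negbK => /andP [wz /orP [wL|wD]].
      by exists z; [rewrite in_setU1 eqxx | case/leafsP: wL].
    have wS : w \in ~: [set z] by rewrite in_setC in_set1.
    have [u uD euw] := HdDz w wS wD.
    exists u => //; rewrite in_setU1 in_setD uD andbT; apply/orP; right.
    apply/negP => /leafsP [_ lu].
    have ewu : e w u by rewrite e_sym.
    by move: wz; rewrite (lu w ewu) eqxx.
  move: (gamma_le dom); rewrite cardsU1 cardsD (setIidPr LzDz) => h.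
  clear -h cDz cardL; case: (z \notin _) h => /= h; lia.
have Echar : forall E, gamma_set e [set: T] E -> z \in E -> E = z |: (Dz :\: leafs z).
  move=> E HE zE.
  have /domP [_ HdE] := gset_dom HE.
  have EL : forall w, w \in leafs z -> w \notin E.
    move=> w /leafsP [ezw lw]; apply/negP => wE.
    have wz : w != z by rewrite eq_sym neq_of_e.
    have dom0 : dominating e ([set: T] :\ w) (E :\ w).
      apply/domP; split.
        by apply/subsetP => t; rewrite !in_setD1 in_setT andbT => /andP [].
      move=> t; rewrite in_setD1 => /andP [tw _] tEw.
      have tE : t \notin E by rewrite in_setD1 tw in tEw.
      have [u uE eut] := HdE t (in_setT t) tE.
      exists u => //; rewrite in_setD1 uE andbT.
      apply: contraNneq tE => uw; rewrite uw in eut.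
      have etw : e t w by rewrite e_sym.
      by rewrite (lw t etw).
    have zEw : z \in E :\ w by rewrite in_setD1 eq_sym wz zE.
    have dom := dom_keep dom0 (in_setT w) zEw ezw.
    move: (gamma_le dom) (cardsD1 w E); rewrite wE (gset_card HE) add1n => h1 h2.
    by rewrite h2 ltnn in h1.
  have domS : dominating e (~: [set z]) ((E :\ z) :|: leafs z).
    apply/domP; split.
      apply/subsetP => t; rewrite in_setU in_setD1 in_setC in_set1.
      case/orP => [/andP [tz _] //|/leafsP [ezt _]].
      by rewrite eq_sym; exact: neq_of_e ezt.
    move=> w; rewrite in_setC in_set1 in_setU in_setD1 negb_or negb_and negbK => wz.
    case/andP => [/orP [wz'|wE] wL]; first by rewrite wz' in wz.
    have [u uE euw] := HdE w (in_setT w) wE.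
    case: (classic (exists2 u, u \in E :\ z & e u w)) => [[u' u'E eu'w]|nex].
      by exists u' => //; rewrite in_setU u'E.
    exfalso; move/negP: wL; apply; apply/leafsP.
    have uz : u = z.
      apply/eqP/negPn/negP => uz; apply: nex; exists u => //; by rewrite in_setD1 uz uE.
    have ezw : e z w by rewrite -uz.
    split => //.
    apply: (Hall E w HE zE wE ezw).
    move=> u' u'E eu'w; apply/eqP/negPn/negP => u'z; apply: nex; exists u' => //.
    by rewrite in_setD1 u'z u'E.
  have cS : #|(E :\ z) :|: leafs z| <= gamma e (~: [set z]).
    have := cardsD1 z E; rewrite zE (gset_card HE) => h.
    rewrite cardsU; clear -h ge_d; lia.
  have gs : gamma_set e (~: [set z]) ((E :\ z) :|: leafs z) := gsetP domS cS.
  have eq := @U z _ _ gs gD.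
  apply/setP => t; rewrite in_setU1 in_setD.
  case: (eqVneq t z) => [->|tz]; first by rewrite zE.
  rewrite -eq in_setU in_setD1 tz /=.
  case tL: (t \in leafs z) => /=; last by rewrite orbF.
  by apply/negbTE/EL.
have [E0 [HE0 zE0]] : exists E, gamma_set e [set: T] E /\ z \in E.
  have [D1 [D2 [H1 H2 n12]]] := Two.
  case z1: (z \in D1); first by exists D1.
  case z2: (z \in D2); first by exists D2.
  have eqz : gmv z = gm.
    apply/eqP; rewrite eqn_leq lez andbT -(gset_card H1); apply: gamma_le.
    by apply: dom_avoid (gset_dom H1) _; rewrite z1.
  have := @U z _ _ (gset_avoid H1 (negbT z1) eqz) (gset_avoid H2 (negbT z2) eqz).
  by move=> E12; rewrite E12 eqxx in n12.
have [B [HB zB]] : exists B, gamma_set e [set: T] B /\ z \notin B.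
  have [D1 [D2 [H1 H2 n12]]] := Two.
  case z1: (z \in D1); last by exists D1; rewrite z1.
  case z2: (z \in D2); last by exists D2; rewrite z2.
  by rewrite (Echar _ H1 z1) (Echar _ H2 z2) eqxx in n12.
have eqz : gmv z = gm.
  apply/eqP; rewrite eqn_leq lez andbT -(gset_card HB); apply: gamma_le.
  exact: dom_avoid (gset_dom HB) zB.
have BD : B = Dz := @U z _ _ (gset_avoid HB zB eqz) gD.
have cA : #|z |: (Dz :\: leafs z)| = gm by rewrite -(Echar _ HE0 zE0) (gset_card HE0).
have L1 : #|leafs z| == 1.
  move: cA; rewrite cardsU1 in_setD (negbTE zDz) andbF /= cardsD (setIidPr LzDz) => h.
  apply/eqP; clear -h cDz eqz cardL; lia.
have [v Lv] := cards1P L1.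
have vL : v \in leafs z by rewrite Lv set11.
have [ezv lv] := @leafsP z v vL.
have zv : z != v := neq_of_e ezv.
have vDz : v \in Dz := subsetP LzDz _ vL.
have DzLz : Dz :\: leafs z = Dz :\ v by rewrite Lv.
have HA0 : gamma_set e [set: T] (z |: (Dz :\ v)) by rewrite -DzLz -(Echar _ HE0 zE0).
have cover : forall y, y \in Dz :\ v \/ y = z \/ y = v.
  move=> y; case: (classic (y \in Dz :\ v)) => yB; [by left|right].
  case: (eqVneq y z) => [->|yz]; [by left|right].
  apply/eqP/negPn/negP => yv; exfalso.
  have yA : y \notin z |: (Dz :\ v) by rewrite in_setU1 (negbTE yz) /=; exact/negP.
  have yB2 : y \notin B.
    by rewrite BD; apply/negP => yD; apply: yB; rewrite in_setD1 yv yD.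
  have le : gmv y <= gm.
    rewrite -(gset_card HB); apply: gamma_le; exact: dom_avoid (gset_dom HB) yB2.
  case: (ltngtP (gmv y) gm) => [lt|gt|eqy]; last first.
  - have := @U y _ _ (gset_avoid HA0 yA eqy) (gset_avoid HB yB2 eqy) => AB.
    by move: zB; rewrite -AB in_setU1 eqxx.
  - by move: le; rewrite leqNgt gt.
  have [S [HS cS]] := gamma_ex e (~: [set y]).
  have HS' : dominating e ([set: T] :\ y) S by rewrite setT_D1.
  have domy := dom_add HS' (in_setT y) (in_setT y) (or_introl erefl).
  have gy : gamma_set e [set: T] (y |: S).
    apply: (gsetP domy); rewrite cardsU1 cS; case: (y \notin S); rewrite ?add1n ?add0n //.
  case zS: (z \in y |: S).
    have := Echar _ gy zS; rewrite DzLz => eA.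
    by move: yA; rewrite -eA in_setU1 eqxx.
  have := @U z _ _ (gset_avoid gy (negbT zS) eqz) (gset_avoid HB zB eqz) => eB.
  by move: yB2; rewrite -eB in_setU1 eqxx.
have [y yB'] : exists y, y \in Dz :\ v.
  apply: NNPP => nex.
  have : #|[set: T]| <= #|[set z; v]|.
    apply: subset_leq_card; apply/subsetP => t _; rewrite !inE.
    case: (cover t) => [tB|[->|->]]; [exfalso; apply: nex; by exists t | by rewrite eqxx | by rewrite eqxx orbT].
  rewrite cardsT cards2 => h; move: hord; case: (z != v) h => /= h; clear -h; lia.
have yDz : y \in Dz by move: yB'; rewrite in_setD1 => /andP [].
have yv : y != v by move: yB'; rewrite in_setD1 => /andP [].
have yz : y != z by apply: contraTneq yDz => ->.
have cB' : (#|Dz :\ v|).+1 = gm by have := cardsD1 v Dz; rewrite vDz cDz eqz.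
have cB'y : (#|(Dz :\ v) :\ y|).+1 = #|Dz :\ v| by have := cardsD1 y (Dz :\ v); rewrite yB'.
have lowy := rem_bound y.
have mk : forall a, (a = z \/ a = v) -> gamma_set e (~: [set y]) (a |: ((Dz :\ v) :\ y)).
  move=> a ha; apply: gsetP; last by rewrite cardsU1; case: (a \notin _) => /=; clear -cB'y cB' lowy; lia.
  apply/domP; split.
    apply/subsetP => t; rewrite in_setU1 in_setD1 in_setC in_set1.
    case/orP => [/eqP ->|/andP [ty _] //].
    by case: ha => ->; rewrite eq_sym.
  move=> w; rewrite in_setC in_set1 in_setU1 in_setD1 negb_or negb_and negbK => wy.
  case/andP => wa /orP [wy'|wB']; first by rewrite wy' in wy.
  case: (cover w) => [wB|[wz|wv]]; first by rewrite wB in wB'.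
  - exists a; first by rewrite in_setU1 eqxx.
    by case: ha wa => -> //; rewrite wz ?eqxx // => _; rewrite e_sym.
  - exists a; first by rewrite in_setU1 eqxx.
    by case: ha wa => -> //; rewrite wv ?eqxx.
have := @U y _ _ (mk z (or_introl erefl)) (mk v (or_intror erefl)).
move/setP/(_ z); rewrite !in_setU1 eqxx /= (negbTE zv) !in_setD1.
by rewrite (negbTE zDz) !andbF.
Qed.

Lemma exists_good z : gm <= gmv z -> exists E q w,
  [/\ gamma_set e [set: T] E, z \in E, q \notin E, e z q & (forall u, u \in E -> e u q -> u = z)]
  /\ (w != z /\ e w q).
Proof.
move=> lez; apply: NNPP => H; apply: (AL lez) => E q HE zE qE ezq priv w ewq.
apply/eqP/negPn/negP => wz; apply: H; exists E, q, w; split => //.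
Qed.

Lemma crit z : gmv z < gm.
Proof.
rewrite ltnNge; apply/negP => lez.
have [E [q [w [[HE zE qE ezq priv] [wz ewq]]]]] := exists_good lez.
have Nz := Kstar lez HE zE qE ezq priv (ex_intro _ w (conj wz ewq)).
have zq : z != q := neq_of_e ezq.
have eqz : e q z by rewrite e_sym.
have leq' : gm <= gmv q.
  apply: (NC_leaf zq eqz) => u uq uz; apply/negP => euz.
  by rewrite (Nz u euz) eqxx in uq.
have [E' [q' [w' [[HE' qE' q'E' eqq' priv'] [w'q ew'q']]]]] := exists_good leq'.
have Nq := Kstar leq' HE' qE' q'E' eqq' priv' (ex_intro _ w' (conj w'q ew'q')).
have zq' : z = q' := Nq z ezq.
rewrite -zq' in ew'q'.
by rewrite (Nz w' ew'q') eqxx in w'q.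
Qed.

Lemma no_isolated v : (forall u, ~~ e u v) -> False.
Proof.
move=> iso.
have [D1 [D2 [H1 H2 n12]]] := Two.
have inv : forall D, gamma_set e [set: T] D -> v \in D.
  move=> D HD; apply/negPn/negP => vD; have /domP [_ Hd] := gset_dom HD.
  have [u _ euv] := Hd v (in_setT v) vD; by rewrite (negbTE (iso u)) in euv.
have low := rem_bound v.
have mk : forall D, gamma_set e [set: T] D -> gamma_set e (~: [set v]) (D :\ v).
  move=> D HD; apply: gsetP.
    apply/domP; split.
      by apply/subsetP => t; rewrite in_setD1 in_setC in_set1 => /andP [].
    move=> w; rewrite in_setC in_set1 in_setD1 negb_and negbK => wv.
    rewrite (negbTE wv) /= => wD.
    have /domP [_ Hd] := gset_dom HD.
    have [u uD euw] := Hd w (in_setT w) wD.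
    exists u => //; rewrite in_setD1 uD andbT; apply: contraTneq euw => ->.
    by rewrite e_sym (negbTE (iso w)).
  have := cardsD1 v D; rewrite (inv _ HD) (gset_card HD) => h; clear -h low; lia.
have E12 := @U v _ _ (mk _ H1) (mk _ H2).
have : D1 = D2.
  apply/setP => t; case: (eqVneq t v) => [->|tv]; first by rewrite (inv _ H1) (inv _ H2).
  by move/setP: E12 => /(_ t); rewrite !in_setD1 tv.
by move=> E; rewrite E eqxx in n12.
Qed.

Lemma part1 x v : ~~ gamma_critical e (~: [set x]) v.
Proof.
apply/negP => /andP [vS lt].
have vx : v != x by move: vS; rewrite in_setC in_set1.
have H := Li vx lt.
case exv: (e x v).
  by have := NC_leaf vx exv H; rewrite leqNgt crit.
apply: (@no_isolated v) => u.
case: (eqVneq u x) => [->|ux]; first by rewrite exv.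
case: (eqVneq u v) => [->|uv]; first by rewrite eirr.
exact: H ux uv.
Qed.

Lemma part2 x y : x != y ->
  gm <= (gamma e (~: [set x; y])).+1 /\
  (forall D : {set T}, gamma_set e (~: [set x]) D -> y \notin D ->
     (gamma e (~: [set x; y])).+1 = gm).
Proof.
move=> xy.
have ge : gmv x <= gamma e (~: [set x] :\ y).
  have := part1 x y; rewrite /gamma_critical in_setC in_set1 eq_sym xy /= -leqNgt.
  done.
have low := rem_bound x.
have cr := crit x.
rewrite Sx2; split; first by clear -ge low; lia.
move=> D HD yD.
have /domP [sub _] := gset_dom HD.
have sub' : D \subset ~: [set x] :\ y.
  apply/subsetP => t tD; rewrite in_setD1 (subsetP sub _ tD) andbT.
  by apply: contraTneq tD => ->.
have sub2 : ~: [set x] :\ y \subset ~: [set x] by apply/subsetP => t; rewrite in_setD1 => /andP [].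
have le := gamma_le (dom_restr (gset_dom HD) sub' sub2).
rewrite (gset_card HD) in le.
clear -le ge low cr; lia.
Qed.

End Main.

Unset Implicit Arguments.

Theorem corollary3p3 (T : finType) (e : rel T)
  (e_sym : symmetric e) (e_irr : irreflexive e)
  (hord : 3 <= #|T|) (hG : hypo_unique e) :
  (forall x v : T, ~~ gamma_critical e (~: [set x]) v) /\
  (forall x y : T, x != y ->
     gamma e [set: T] <= (gamma e (~: [set x; y])).+1 /\
     (forall D : {set T}, gamma_set e (~: [set x]) D -> y \notin D ->
        (gamma e (~: [set x; y])).+1 = gamma e [set: T])).
Proof.
split.
- move=> x v; exact: (part1 e_sym e_irr hord hG).
- move=> x y xy; exact: (part2 e_sym e_irr hord hG xy).
Qed.
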